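(* Let $\mathbb{K}$ be a field of characteristic $2$, let $(A,\cdot,\{-,-\},(-)^{\{2\}})$ be a restricted Poisson algebra, let $k\ge1$ and let $(A^t_k,\cdot,\mu_{(k)},\omega_{(k)})$ be a formal deformation of order $k$ of $A$, with $\mu_{(k)}=\{-,-\}+\sum_{i=1}^kt^i\mu_i$ and $\omega_{(k)}=(-)^{\{2\}}+\sum_{i=1}^kt^i\omega_i$. Define, for $x,y,z\in A$, $\mathrm{obs}^{(1)}_{k+1}(x,y,z)=\sum_{i=1}^k\big(\mu_i(x,\mu_{k+1-i}(y,z))+\mu_i(y,\mu_{k+1-i}(z,x))+\mu_i(z,\mu_{k+1-i}(x,y))\big)$ and $\mathrm{obs}^{(2)}_{k+1}(x,y)=\sum_{i=1}^k\big(\mu_i(y,\omega_{k+1-i}(x))+\mu_i(x,\mu_{k+1-i}(x,y))\big)$. Then $(\mathrm{obs}^{(1)}_{k+1},\mathrm{obs}^{(2)}_{k+1})\in C^3_{\rm PA}(A)$.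
   Context: $\mathbb{K}$ has characteristic $2$. Restricted Poisson algebra: commutative associative $(A,\cdot)$ with Lie bracket satisfying $\{ab,c\}=a\{b,c\}+b\{a,c\}$, and a map $(-)^{\{2\}}$ with $(\lambda x)^{\{2\}}=\lambda^2x^{\{2\}}$, $\mathrm{ad}_{x^{\{2\}}}=\mathrm{ad}_x^2$, $(x+y)^{\{2\}}=x^{\{2\}}+y^{\{2\}}+\{x,y\}$, $(xy)^{\{2\}}=x^2y^{\{2\}}+y^2x^{\{2\}}+xy\{x,y\}$. $\mathfrak{X}^n(A)$: alternating $n$-linear maps $A^n\to A$ that are derivations of $\cdot$ in each argument. For $n\ge2$, $C^n_{\rm PA}(A)$: pairs $(\varphi,\omega)$ with $\varphi\in\mathfrak{X}^n(A)$ and $\omega:A\times A^{n-2}\to A$ alternating multilinear in the last $n-2$ arguments, such that for $z=(z_2,..,z_{n-1})$: $\omega(\lambda x,z)=\lambda^2\omega(x,z)$, $\omega(x+y,z)=\omega(x,z)+\omega(y,z)+\varphi(x,y,z)$, $\omega(xy,z)=x^2\omega(y,z)+y^2\omega(x,z)+xy\varphi(x,y,z)$, $\omega(x,..,z_iz_i',..)=z_i\omega(x,..,z_i',..)+z_i'\omega(x,..,z_i,..)$. (For $n=2$, $\omega:A\to A$.) $\mathbb{K}^t_k=\mathbb{K}[t]/(t^{k+1})$, $A^t_k=A\otimes\mathbb{K}^t_k$. A formal deformation of order $k$: all $(\mu_i,\omega_i)\in C^2_{\rm PA}(A)$ and $(A^t_k,\mu_{(k)},\omega_{(k)})$ is a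 restricted Lie algebra over $\mathbb{K}^t_k$ ($\mu$ extended bilinearly, $\omega$ extended by $\omega(\lambda X)=\lambda^2\omega(X)$, $\omega(X+Y)=\omega(X)+\omega(Y)+\mu(X,Y)$). *)

(* Defs.v *)
From HB Require Import structures.
From mathcomp Require Import all_boot all_order all_algebra.
Set Implicit Arguments. Unset Strict Implicit. Unset Printing Implicit Defensive.
Import GRing.Theory.
Local Open Scope ring_scope.

(* Conventions: A is a K-vector space ([lmodType K]) carrying an explicit
   multiplication [mul] (commutative, associative, K-bilinear; no unit assumed),
   a bracket [br] and a map [sq] = (-)^{2}.  x^2 means [mul x x]. *)

Section RPA.
Variables (K : fieldType) (A : lmodType K).
Local Notation op2 := (A -> A -> A).

Definition is_comm_assoc (mul : op2) : Prop :=
  [/\ forall (a : K) x y z, mul (a *: x + y) z = a *: mul x z + mul y z,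
      forall x y, mul x y = mul y x &
      forall x y z, mul x (mul y z) = mul (mul x y) z].

Definition is_poisson (mul br : op2) : Prop :=
  is_comm_assoc mul /\
  [/\ forall (a : K) x y z, br (a *: x + y) z = a *: br x z + br y z,
      forall (a : K) x y z, br x (a *: y + z) = a *: br x y + br x z,
      forall x, br x x = 0,
      forall x y z, br x (br y z) + br y (br z x) + br z (br x y) = 0 &
      forall a b c, br (mul a b) c = mul a (br b c) + mul b (br a c)].

Definition is_restricted_poisson (mul br : op2) (sq : A -> A) : Prop :=
  is_poisson mul br /\
  [/\ forall (a : K) x, sq (a *: x) = a ^+ 2 *: sq x,
      forall x y, br (sq x) y = br x (br x y),
      forall x y, sq (x + y) = sq x + sq y + br x y &
      forall x y, sq (mul x y) =
        mul (mul x x) (sq y) + mul (mul y y) (sq x) + mul (mul x y) (br x y)].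

Definition is_X2 (mul : op2) (phi : op2) : Prop :=
  [/\ forall (a : K) x y z, phi (a *: x + y) z = a *: phi x z + phi y z,
      forall (a : K) x y z, phi x (a *: y + z) = a *: phi x y + phi x z,
      forall x, phi x x = 0,
      forall a b y, phi (mul a b) y = mul a (phi b y) + mul b (phi a y) &
      forall x a b, phi x (mul a b) = mul a (phi x b) + mul b (phi x a)].

Definition is_X3 (mul : op2) (phi : A -> A -> A -> A) : Prop :=
  [/\ forall (a : K) x x' y z, phi (a *: x + x') y z = a *: phi x y z + phi x' y z,
      forall (a : K) x y y' z, phi x (a *: y + y') z = a *: phi x y z + phi x y' z,
      forall (a : K) x y z z', phi x y (a *: z + z') = a *: phi x y z + phi x y z',
      [/\ forall x z, phi x x z = 0, forall x y, phi x y x = 0 &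
          forall x y, phi x y y = 0] &
      [/\ forall a b y z, phi (mul a b) y z = mul a (phi b y z) + mul b (phi a y z),
      forall x a b z, phi x (mul a b) z = mul a (phi x b z) + mul b (phi x a z) &
      forall x y a b, phi x y (mul a b) = mul a (phi x y b) + mul b (phi x y a)]].

Definition is_C2PA (mul : op2) (phi : op2) (om : A -> A) : Prop :=
  is_X2 mul phi /\
  [/\ forall (a : K) x, om (a *: x) = a ^+ 2 *: om x,
      forall x y, om (x + y) = om x + om y + phi x y &
      forall x y, om (mul x y) =
        mul (mul x x) (om y) + mul (mul y y) (om x) + mul (mul x y) (phi x y)].

Definition is_C3PA (mul : op2) (phi : A -> A -> A -> A) (om : A -> A -> A) : Prop :=
  is_X3 mul phi /\
  [/\ forall (a : K) x z, om (a *: x) z = a ^+ 2 *: om x z,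
      forall x y z, om (x + y) z = om x z + om y z + phi x y z,
      forall x y z, om (mul x y) z =
        mul (mul x x) (om y z) + mul (mul y y) (om x z) + mul (mul x y) (phi x y z),
      forall (b : K) x z z', om x (b *: z + z') = b *: om x z + om x z' &
      forall x z z', om x (mul z z') = mul z (om x z') + mul z' (om x z)].

(* ---- A^t_k = A ⊗ K[t]/(t^(k+1)), elements represented by their coefficient
   sequences X : nat -> A (X n = coefficient of t^n); only n <= k matter. *)

Definition teq (k : nat) (X Y : nat -> A) : Prop := forall n, (n <= k)%N -> X n = Y n.

Definition tadd (X Y : nat -> A) : nat -> A := fun n => X n + Y n.

(* scalars of K^t_k represented by polynomials p (modulo t^(k+1)) *)
Definition tscale (p : {poly K}) (X : nat -> A) : nat -> A :=
  fun n => \sum_(j < n.+1) p`_j *: X (n - j)%N.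

Definition defM (br : op2) (mu : nat -> op2) (i : nat) : op2 :=
  if i == 0%N then br else mu i.
Definition defW (sq : A -> A) (om : nat -> A -> A) (i : nat) : A -> A :=
  if i == 0%N then sq else om i.

(* mu_(k) = sum_i t^i M_i, extended K^t_k-bilinearly *)
Definition tbr (M : nat -> op2) (X Y : nat -> A) : nat -> A :=
  fun n => \sum_(i < n.+1) \sum_(a < n.+1) \sum_(b < n.+1 | (i + a + b == n)%N)
             M i (X a) (Y b).

(* omega_(k) = sum_i t^i W_i, extended by omega(lam X) = lam^2 omega(X) and
   omega(X+Y) = omega(X)+omega(Y)+mu(X,Y):
   omega(sum_a t^a x_a) = sum_a t^(2a) omega(x_a) + sum_(a<b) t^(a+b) mu(x_a,x_b) *)
Definition tsq (M : nat -> op2) (W : nat -> A -> A) (X : nat -> A) : nat -> A :=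
  fun n => \sum_(i < n.+1) \sum_(a < n.+1 | (i + a.*2 == n)%N) W i (X a)
         + \sum_(i < n.+1) \sum_(a < n.+1) \sum_(b < n.+1 | (a < b)%N && (i + a + b == n)%N)
             M i (X a) (X b).

Definition is_restricted_lie_tk (k : nat)
    (L : (nat -> A) -> (nat -> A) -> (nat -> A)) (P : (nat -> A) -> (nat -> A)) : Prop :=
  [/\ forall p X Y Z, teq k (L (tadd (tscale p X) Y) Z) (tadd (tscale p (L X Z)) (L Y Z)),
      forall p X Y Z, teq k (L X (tadd (tscale p Y) Z)) (tadd (tscale p (L X Y)) (L X Z)),
      forall X, teq k (L X X) (fun=> 0),
      forall X Y Z, teq k (tadd (tadd (L X (L Y Z)) (L Y (L Z X))) (L Z (L X Y))) (fun=> 0) &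
      [/\ forall p X, teq k (P (tscale p X)) (tscale (p * p) (P X)),
      forall X Y, teq k (P (tadd X Y)) (tadd (tadd (P X) (P Y)) (L X Y)) &
      forall X Y, teq k (L (P X) Y) (L X (L X Y))]].

Definition formal_deformation (k : nat) (mul br : op2) (sq : A -> A)
    (mu : nat -> op2) (om : nat -> A -> A) : Prop :=
  (forall i, (1 <= i <= k)%N -> is_C2PA mul (mu i) (om i)) /\
  is_restricted_lie_tk k (tbr (defM br mu)) (tsq (defM br mu) (defW sq om)).

Definition obs1 (k : nat) (mu : nat -> op2) (x y z : A) : A :=
  \sum_(1 <= i < k.+1)
     (mu i x (mu (k.+1 - i)%N y z) + mu i y (mu (k.+1 - i)%N z x)
      + mu i z (mu (k.+1 - i)%N x y)).

Definition obs2 (k : nat) (mu : nat -> op2) (om : nat -> A -> A) (x y : A) : A :=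
  \sum_(1 <= i < k.+1)
     (mu i y (om (k.+1 - i)%N x) + mu i x (mu (k.+1 - i)%N x y)).

End RPA.

(* Main.v *)
Require Import Defs.
From mathcomp Require Import all_boot all_order all_algebra zify.
Set Implicit Arguments. Unset Strict Implicit. Unset Printing Implicit Defensive.
Import GRing.Theory.
Local Open Scope ring_scope.

Inductive cgex := CAtom of nat | CAdd of cgex & cgex | CZero | COpp of cgex.

Section CG.
Variable V : zmodType.
Hypothesis c2 : forall v : V, v + v = 0.

Fixpoint cgeval (env : seq V) e : V := match e with
  | CAtom n => nth 0 env n | CAdd a b => cgeval env a + cgeval env b
  | CZero => 0 | COpp a => - cgeval env a end.
Fixpoint cgflat e : seq nat := match e with
  | CAtom n => [:: n] | CAdd a b => cgflat a ++ cgflat b | CZero => [::]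
  | COpp a => cgflat a end.
Definition cgden (env : seq V) s : V := \sum_(i <- s) nth 0 env i.

Lemma oppE (v : V) : - v = v.
Proof. by apply/esym/eqP; rewrite -addr_eq0 c2. Qed.

Lemma cgevalE env e : cgeval env e = cgden env (cgflat e).
Proof.
elim: e => [n|a IHa b IHb||a IHa] /=; rewrite /cgden ?big_cons ?big_nil ?addr0 //.
  by rewrite big_cat IHa IHb.
by rewrite oppE IHa.
Qed.

Lemma cgden_count env s M : all (fun x => x < M)%N s ->
  cgden env s = \sum_(n <- iota 0 M) nth 0 env n *+ count_mem n s.
Proof.
rewrite /cgden; elim: s => [|a s IH] /=.
  by rewrite big_nil big1.
case/andP=> Ha Hs; rewrite big_cons IH //.
under [RHS]eq_bigr do rewrite mulrnDr.
rewrite big_split /=; congr (_ + _).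
rewrite (bigD1_seq a) ?iota_uniq //=; last by rewrite mem_iota.
rewrite eqxx mulr1n big1 ?addr0 // => i /negbTE; rewrite eq_sym => ->.
by rewrite mulr0n.
Qed.

Lemma mulrn_odd (x : V) c : x *+ c = x *+ odd c.
Proof.
rewrite -{1}(odd_double_half c) mulrnDr -muln2 mulnC mulrnA mulr2n c2 mul0rn.
by rewrite addr0.
Qed.

Definition cgcheck M s1 s2 :=
  all (fun x => x < M)%N (s1 ++ s2) &&
  all (fun n => odd (count_mem n s1) == odd (count_mem n s2)) (iota 0 M).

Lemma cg_correct env M e1 e2 : cgcheck M (cgflat e1) (cgflat e2) ->
  cgeval env e1 = cgeval env e2.
Proof.
case/andP; rewrite all_cat => /andP[H1 H2] H.
rewrite !cgevalE (cgden_count _ H1) (cgden_count _ H2).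
apply: eq_big_seq => n Hn; rewrite mulrn_odd [RHS]mulrn_odd.
by move/allP: H => /(_ n Hn) /eqP ->.
Qed.
End CG.

Ltac cg_in x l := match l with
 | nil => constr:(false)
 | cons x _ => constr:(true)
 | cons _ ?l' => cg_in x l'
 end.
Ltac cg_idx x l := match l with
 | cons x _ => constr:(O)
 | cons _ ?l' => let n := cg_idx x l' in constr:(S n)
 end.
Ltac cg_collect t env :=
  lazymatch t with
  | @GRing.add _ ?a ?b => let env := cg_collect a env in cg_collect b env
  | @GRing.opp _ ?a => cg_collect a env
  | @GRing.zero _ => env
  | _ => let b := cg_in t env in
         lazymatch b with true => env | false => constr:(cons t env) end
  end.
Ltac cg_reify t env :=
  lazymatch t with
  | @GRing.add _ ?a ?b => let ea := cg_reify a env in let eb := cg_reify b env in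
                          constr:(CAdd ea eb)
  | @GRing.opp _ ?a => let ea := cg_reify a env in constr:(COpp ea)
  | @GRing.zero _ => constr:(CZero)
  | _ => let n := cg_idx t env in constr:(CAtom n)
  end.
Ltac cg_len l := lazymatch l with nil => constr:(O) | cons _ ?l' => let n := cg_len l' in constr:(S n) end.
Ltac cg c2 :=
  lazymatch goal with |- @eq ?T ?L ?R =>
    let env0 := constr:(@nil T) in
    let env := cg_collect L env0 in let env := cg_collect R env in
    let eL := cg_reify L env in let eR := cg_reify R env in
    let M := cg_len env in
    change (cgeval env eL = cgeval env eR);
    apply: (@cg_correct _ c2 env M eL eR); vm_compute; reflexivity
  end.


Section Main.
Variables (K : fieldType) (A : lmodType K) (mul : A -> A -> A).
Hypothesis HM : is_comm_assoc mul.
Hypothesis c2 : forall v : A, v + v = 0.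

Lemma mulC x y : mul x y = mul y x. Proof. by case: HM. Qed.
Lemma mulA x y z : mul x (mul y z) = mul (mul x y) z. Proof. by case: HM. Qed.
Lemma mulCA x y z : mul x (mul y z) = mul y (mul x z).
Proof. by rewrite mulA (mulC x) -mulA. Qed.
Lemma mulDl x y z : mul (x + y) z = mul x z + mul y z.
Proof. by case: HM => H _ _; rewrite -{1}(scale1r x) H scale1r. Qed.
Lemma mul0l z : mul 0 z = 0.
Proof.
case: HM => H _ _; have := H 1 0 0 z; rewrite !scale1r addr0 => h.
have: mul 0 z + mul 0 z - mul 0 z = mul 0 z - mul 0 z by rewrite -h.
by rewrite addrK subrr.
Qed.
Lemma mulZl (a : K) x z : mul (a *: x) z = a *: mul x z.
Proof.
case: HM => H _ _; have := H a x 0 z; rewrite addr0 => ->.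
by rewrite mul0l addr0.
Qed.
Lemma mulDr x y z : mul z (x + y) = mul z x + mul z y.
Proof. by rewrite !(mulC z) mulDl. Qed.
Lemma mulZr (a : K) x z : mul z (a *: x) = a *: mul z x.
Proof. by rewrite !(mulC z) mulZl. Qed.
Lemma mul0r z : mul z 0 = 0.
Proof. by rewrite mulC mul0l. Qed.

Section X2.
Variable phi : A -> A -> A.
Hypothesis Hp : is_X2 mul phi.
Lemma pD1 x y z : phi (x + y) z = phi x z + phi y z.
Proof. by case: Hp => H _ _ _ _; rewrite -{1}(scale1r x) H scale1r. Qed.
Lemma pD2 x y z : phi z (x + y) = phi z x + phi z y.
Proof. by case: Hp => _ H _ _ _; rewrite -{1}(scale1r x) H scale1r. Qed.
Lemma p0l z : phi 0 z = 0.
Proof.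
have := pD1 0 0 z; rewrite addr0 => h.
have: phi 0 z + phi 0 z - phi 0 z = phi 0 z - phi 0 z by rewrite -h.
by rewrite addrK subrr.
Qed.
Lemma p0r z : phi z 0 = 0.
Proof.
have := pD2 0 0 z; rewrite addr0 => h.
have: phi z 0 + phi z 0 - phi z 0 = phi z 0 - phi z 0 by rewrite -h.
by rewrite addrK subrr.
Qed.
Lemma pZ1 (a : K) x z : phi (a *: x) z = a *: phi x z.
Proof. by case: Hp => H _ _ _ _; rewrite -(addr0 (a *: x)) H p0l addr0. Qed.
Lemma pZ2 (a : K) x z : phi z (a *: x) = a *: phi z x.
Proof. by case: Hp => _ H _ _ _; rewrite -(addr0 (a *: x)) H p0r addr0. Qed.
Lemma pxx x : phi x x = 0. Proof. by case: Hp. Qed.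
Lemma pC x y : phi x y = phi y x.
Proof.
have := pxx (x + y); rewrite pD1 !pD2 !pxx add0r addr0 => /eqP.
by rewrite addr_eq0 => /eqP ->; rewrite oppE.
Qed.
Lemma pMl a b y : phi (mul a b) y = mul a (phi b y) + mul b (phi a y).
Proof. by case: Hp. Qed.
Lemma pMr x a b : phi x (mul a b) = mul a (phi x b) + mul b (phi x a).
Proof. by case: Hp. Qed.
End X2.

Lemma sum_swap (F : nat -> nat -> A) k :
  \sum_(1 <= i < k.+1) (F i (k.+1 - i)%N + F (k.+1 - i)%N i) = 0.
Proof.
rewrite big_split /= [X in _ + X]big_nat_rev /=.
rewrite [X in _ + X](eq_big_nat _ _ (F2 := fun i => F i (k.+1 - i)%N)) ?c2 //.
move=> i /andP[H1 H2]; congr F; lia.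
Qed.

Section PW.
Variables (phi psi : A -> A -> A) (om' : A -> A).
Hypothesis Hphi : is_X2 mul phi.
Hypothesis Hpsi : is_C2PA mul psi om'.
Let Hpsi2 : is_X2 mul psi. Proof. by case: Hpsi. Qed.
Lemma omZ (a : K) x : om' (a *: x) = a ^+ 2 *: om' x. Proof. by case: Hpsi => _ []. Qed.
Lemma omD x y : om' (x + y) = om' x + om' y + psi x y. Proof. by case: Hpsi => _ []. Qed.
Lemma omM x y : om' (mul x y) =
  mul (mul x x) (om' y) + mul (mul y y) (om' x) + mul (mul x y) (psi x y).
Proof. by case: Hpsi => _ []. Qed.

Ltac ex := rewrite ?(pD1 Hphi) ?(pD2 Hphi) ?(pD1 Hpsi2) ?(pD2 Hpsi2)
  ?(pZ1 Hphi) ?(pZ2 Hphi) ?(pZ1 Hpsi2) ?(pZ2 Hpsi2)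
  ?(pMl Hphi) ?(pMr Hphi) ?(pMl Hpsi2) ?(pMr Hpsi2)
  ?(pD1 Hphi) ?(pD2 Hphi) ?(pD1 Hpsi2) ?(pD2 Hpsi2)
  ?(pZ1 Hphi) ?(pZ2 Hphi) ?(pZ1 Hpsi2) ?(pZ2 Hpsi2)
  ?mulDl ?mulDr ?mulZl ?mulZr ?scalerDr.
Ltac exx := do 3 ex.

Lemma pw_lin1 (a : K) x x' y z :
  phi (a *: x + x') (psi y z) + phi y (psi z (a *: x + x')) + phi z (psi (a *: x + x') y)
  = a *: (phi x (psi y z) + phi y (psi z x) + phi z (psi x y))
    + (phi x' (psi y z) + phi y (psi z x') + phi z (psi x' y)).
Proof. exx. cg c2. Qed.

Lemma pw_alt x z : phi x (psi x z) + phi x (psi z x) + phi z (psi x x) = 0.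
Proof. by rewrite (pC Hpsi2 z) (pxx Hpsi2) (p0r Hphi) addr0 c2. Qed.

Definition G (f g : A -> A -> A) a b y z := mul (g z b) (f y a) + mul (g z a) (f y b).

Lemma pw_der1 a b y z :
  phi (mul a b) (psi y z) + phi y (psi z (mul a b)) + phi z (psi (mul a b) y)
  = mul a (phi b (psi y z) + phi y (psi z b) + phi z (psi b y))
    + mul b (phi a (psi y z) + phi y (psi z a) + phi z (psi a y))
    + (G phi psi a b y z + G psi phi a b y z).
Proof.
rewrite /G;exx.
rewrite [mul (psi b y) _]mulC [mul (psi a y) _]mulC [psi b y](pC Hpsi2) [psi a y](pC Hpsi2).
cg c2.
Qed.

Lemma pw_sc (a : K) x z :
  phi z (om' (a *: x)) + phi (a *: x) (psi (a *: x) z)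
  = a ^+ 2 *: (phi z (om' x) + phi x (psi x z)).
Proof. by rewrite omZ;exx; rewrite scalerA -expr2. Qed.

Lemma pw_add x y z :
  phi z (om' (x + y)) + phi (x + y) (psi (x + y) z)
  = (phi z (om' x) + phi x (psi x z)) + (phi z (om' y) + phi y (psi y z))
    + (phi x (psi y z) + phi y (psi z x) + phi z (psi x y)).
Proof. rewrite omD;exx; rewrite [psi z x](pC Hpsi2). cg c2. Qed.

Definition F (f g : A -> A -> A) x y z :=
  mul x (mul (g x y) (f y z)) + mul y (mul (g x y) (f x z)).

Lemma pw_mul x y z :
  phi z (om' (mul x y)) + phi (mul x y) (psi (mul x y) z)
  = mul (mul x x) (phi z (om' y) + phi y (psi y z))
    + mul (mul y y) (phi z (om' x) + phi x (psi x z))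
    + mul (mul x y) (phi x (psi y z) + phi y (psi z x) + phi z (psi x y))
    + (F phi psi x y z + F psi phi x y z).
Proof.
rewrite /F omM;exx.
rewrite !(pxx Hphi) !mul0r.
rewrite [mul x (mul x _)]mulA [mul y (mul y _)]mulA [mul x (mul y _)]mulA.
rewrite [mul y (mul x _)]mulA (mulC y x).
rewrite [mul (psi y z) (phi y x)]mulC [phi y x](pC Hphi) [mul (psi x z) (phi x y)]mulC.
rewrite [mul (psi x y) (mul x _)]mulCA [mul (psi x y) (mul y _)]mulCA.
rewrite [phi z y](pC Hphi) [phi z x](pC Hphi) [psi z x](pC Hpsi2).
cg c2.
Qed.

Lemma pw_lin2 (b : K) x z z' :
  phi (b *: z + z') (om' x) + phi x (psi x (b *: z + z'))
  = b *: (phi z (om' x) + phi x (psi x z)) + (phi z' (om' x) + phi x (psi x z')).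
Proof. ex; cg c2. Qed.

Definition H (f g : A -> A -> A) x z z' := mul (g x z') (f x z).

Lemma pw_der2 x z z' :
  phi (mul z z') (om' x) + phi x (psi x (mul z z'))
  = mul z (phi z' (om' x) + phi x (psi x z')) + mul z' (phi z (om' x) + phi x (psi x z))
    + (H phi psi x z z' + H psi phi x z z').
Proof. rewrite /H;exx; rewrite [mul (psi x z) _]mulC; cg c2. Qed.
End PW.

Lemma mul_sumr a (r : seq nat) (P : pred nat) (Fn : nat -> A) :
  mul a (\sum_(i <- r | P i) Fn i) = \sum_(i <- r | P i) mul a (Fn i).
Proof. apply: (big_morph (mul a)); [by move=> u v; rewrite mulDr | exact: mul0r]. Qed.

Section Obs.
Variables (k : nat) (mu : nat -> A -> A -> A) (om : nat -> A -> A).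
Hypothesis Hmu : forall i, (1 <= i <= k)%N -> is_C2PA mul (mu i) (om i).

Lemma getC i : (1 <= i < k.+1)%N ->
  is_X2 mul (mu i) /\ is_C2PA mul (mu (k.+1 - i)%N) (om (k.+1 - i)%N).
Proof. move=> Hi; split; first by case: (Hmu (i:=i)) => //; lia. by apply: Hmu; lia. Qed.

Local Notation o1 := (obs1 k mu).
Local Notation o2 := (obs2 k mu om).

Lemma o1_lin1 (a : K) x x' y z : o1 (a *: x + x') y z = a *: o1 x y z + o1 x' y z.
Proof.
rewrite /obs1 scaler_sumr -big_split; apply: eq_big_nat => i Hi.
by case: (getC Hi) => H1 H2; exact: (pw_lin1 H1 H2).
Qed.

Lemma o1_cyc x y z : o1 x y z = o1 y z x.
Proof. by apply: eq_bigr => i _; cg c2. Qed.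
Lemma o1_cyc2 x y z : o1 x y z = o1 z x y.
Proof. by rewrite o1_cyc o1_cyc. Qed.

Lemma o1_lin2 (a : K) x y y' z : o1 x (a *: y + y') z = a *: o1 x y z + o1 x y' z.
Proof. by rewrite !(o1_cyc x) o1_lin1. Qed.
Lemma o1_lin3 (a : K) x y z z' : o1 x y (a *: z + z') = a *: o1 x y z + o1 x y z'.
Proof. by rewrite !(o1_cyc2 x y) o1_lin1. Qed.

Lemma o1_alt1 x z : o1 x x z = 0.
Proof.
rewrite /obs1 big1_seq // => i; rewrite mem_index_iota => Hi.
by case: (getC Hi) => H1 H2; exact: (pw_alt H1 H2).
Qed.
Lemma o1_alt2 x y : o1 x y x = 0. Proof. by rewrite o1_cyc2 o1_alt1. Qed.
Lemma o1_alt3 x y : o1 x y y = 0. Proof. by rewrite o1_cyc o1_alt1. Qed.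

Lemma o1_der1 a b y z : o1 (mul a b) y z = mul a (o1 b y z) + mul b (o1 a y z).
Proof.
transitivity (\sum_(1 <= i < k.+1)
  (mul a (mu i b (mu (k.+1 - i)%N y z) + mu i y (mu (k.+1 - i)%N z b) + mu i z (mu (k.+1 - i)%N b y))
  + mul b (mu i a (mu (k.+1 - i)%N y z) + mu i y (mu (k.+1 - i)%N z a) + mu i z (mu (k.+1 - i)%N a y))
  + (G (mu i) (mu (k.+1 - i)%N) a b y z + G (mu (k.+1 - i)%N) (mu i) a b y z))).
  apply: eq_big_nat => i Hi.
  by case: (getC Hi) => H1 H2; exact: (pw_der1 H1 H2).
have SS := sum_swap (fun i j => G (mu i) (mu j) a b y z) k; rewrite /= in SS.
by rewrite big_split /= SS addr0 big_split /= !mul_sumr.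
Qed.
Lemma o1_der2 x a b z : o1 x (mul a b) z = mul a (o1 x b z) + mul b (o1 x a z).
Proof. by rewrite !(o1_cyc x) o1_der1. Qed.
Lemma o1_der3 x y a b : o1 x y (mul a b) = mul a (o1 x y b) + mul b (o1 x y a).
Proof. by rewrite !(o1_cyc2 x y) o1_der1. Qed.

Lemma o2_sc (a : K) x z : o2 (a *: x) z = a ^+ 2 *: o2 x z.
Proof.
rewrite /obs2 scaler_sumr; apply: eq_big_nat => i Hi.
by case: (getC Hi) => H1 H2; exact: (pw_sc H1 H2).
Qed.

Lemma o2_add x y z : o2 (x + y) z = o2 x z + o2 y z + o1 x y z.
Proof.
rewrite /obs2 /obs1 -!big_split; apply: eq_big_nat => i Hi.
by case: (getC Hi) => H1 H2; exact: (pw_add H1 H2).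
Qed.

Lemma o2_mul x y z : o2 (mul x y) z =
  mul (mul x x) (o2 y z) + mul (mul y y) (o2 x z) + mul (mul x y) (o1 x y z).
Proof.
transitivity (\sum_(1 <= i < k.+1)
  (mul (mul x x) (mu i z (om (k.+1 - i)%N y) + mu i y (mu (k.+1 - i)%N y z))
  + mul (mul y y) (mu i z (om (k.+1 - i)%N x) + mu i x (mu (k.+1 - i)%N x z))
  + mul (mul x y) (mu i x (mu (k.+1 - i)%N y z) + mu i y (mu (k.+1 - i)%N z x)
                   + mu i z (mu (k.+1 - i)%N x y))
  + (F (mu i) (mu (k.+1 - i)%N) x y z + F (mu (k.+1 - i)%N) (mu i) x y z))).
  apply: eq_big_nat => i Hi.
  by case: (getC Hi) => H1 H2; exact: (pw_mul H1 H2).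
have SS := sum_swap (fun i j => F (mu i) (mu j) x y z) k; rewrite /= in SS.
by rewrite big_split /= SS addr0 !big_split /= !mul_sumr.
Qed.

Lemma o2_lin2 (b : K) x z z' : o2 x (b *: z + z') = b *: o2 x z + o2 x z'.
Proof.
rewrite /obs2 scaler_sumr -big_split; apply: eq_big_nat => i Hi.
by case: (getC Hi) => H1 H2; exact: (pw_lin2 H1 H2).
Qed.

Lemma o2_der2 x z z' : o2 x (mul z z') = mul z (o2 x z') + mul z' (o2 x z).
Proof.
transitivity (\sum_(1 <= i < k.+1)
  (mul z (mu i z' (om (k.+1 - i)%N x) + mu i x (mu (k.+1 - i)%N x z'))
  + mul z' (mu i z (om (k.+1 - i)%N x) + mu i x (mu (k.+1 - i)%N x z))
  + (H (mu i) (mu (k.+1 - i)%N) x z z' + H (mu (k.+1 - i)%N) (mu i) x z z'))).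
  apply: eq_big_nat => i Hi.
  by case: (getC Hi) => H1 H2; exact: (pw_der2 H1 H2).
have SS := sum_swap (fun i j => H (mu i) (mu j) x z z') k; rewrite /= in SS.
by rewrite big_split /= SS addr0 big_split /= !mul_sumr.
Qed.

Lemma obs_C3PA : is_C3PA mul (obs1 k mu) (obs2 k mu om).
Proof.
split; first split.
- exact: o1_lin1.
- exact: o1_lin2.
- exact: o1_lin3.
- split; [exact: o1_alt1 | exact: o1_alt2 | exact: o1_alt3].
- split; [exact: o1_der1 | exact: o1_der2 | exact: o1_der3].
split; [exact: o2_sc | exact: o2_add | exact: o2_mul | exact: o2_lin2 | exact: o2_der2].
Qed.
End Obs.
End Main.


Unset Implicit Arguments.

Theorem mainTheorem17 (K : fieldType) (A : lmodType K)
    (mul br : A -> A -> A) (sq : A -> A) (k : nat)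
    (mu : nat -> A -> A -> A) (om : nat -> A -> A) :
  2%N \in [pchar K] ->
  is_restricted_poisson mul br sq ->
  (1 <= k)%N ->
  formal_deformation k mul br sq mu om ->
  is_C3PA mul (obs1 k mu) (obs2 k mu om).
Proof.
move=> Hc [[HM _] _] _ [Hmu _].
have c2 : forall v : A, v + v = 0.
  by move=> v; rewrite -mulr2n -scaler_nat (pcharf0 Hc) scale0r.
exact: obs_C3PA.
Qed.
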